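(* Let $X$ be a real Banach space and let $A: X \rightrightarrows X^*$ be a maximal monotone operator whose Fitzpatrick family is a singleton, i.e. $\mathcal{F}_A = \{F_A\}$. Then the following are equivalent: (i) $A$ is $3$-monotone; (ii) $A$ is cyclically monotone. Moreover, in this case, for every $v^* \in \mathrm{Im}(A)$ the function $x \mapsto F_A(x,v^* )$ is proper, convex and lower semicontinuous on $X$, and \[ A = \partial F_A(\cdot, v^* ). \]
   Context: A function $h: X\times X^* \to \mathbb{R}\cup\{+\infty\}$ is a representative function of $A$ if (R1) $h$ is proper, convex and lower semicontinuous; (R2) $h(x,x^* ) \ge \langle x,x^*\rangle$ for all $(x,x^* )\in X\times X^*$; (R3) $h(x,x^* ) = \langle x,x^*\rangle$ for all $(x,x^* )\in \mathrm{Gr}(A)$. The Fitzpatrick family $\mathcal{F}_A$ is the set of all representative functions of $A$. The Fitzpatrick function is $F_A(x,x^* ) = \sup_{(y,y^* )\in\mathrm{Gr}(A)}\{\langle y,x^*\rangle + \langle x,y^*\rangle - \langle y,y^*\rangle\}$. $\mathrm{Im}(A) = \{x^*: \exists x,\ x^*\in Ax\}$. $A$ is $n$-monotone if $\sum_{i=1}^n \langle a_i,a_i^*\rangle \ge \sum_{i=1}^n \langle a_{i+1},a_i^*\rangle$ for all $(a_i,a_i^* )\in\mathrm{Gr}(A)$, $i=1,\dots,n$, with $a_{n+1}=a_1$; cyclically monotone means $n$-monotone for all $n\in\mathbb{N}$. $\partial$ denotes the convex subdifferential. *)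

(* Defs.v *)
(* X : a real Banach space (completeNormedModType R
   over a realType R); the dual X-star is represented by the functions X -> R that
   are linear and continuous (predicate [is_dual]); the duality pairing
   <x, x-star> is the application x-star x. *)
From HB Require Import structures.
From mathcomp Require Import all_boot all_order all_algebra.
From mathcomp Require Import all_classical all_reals all_analysis.
Set Implicit Arguments. Unset Strict Implicit. Unset Printing Implicit Defensive.
Import Order.TTheory GRing.Theory Num.Theory.
Import numFieldNormedType.Exports.
Local Open Scope classical_set_scope.
Local Open Scope ring_scope.

Section Defs.
Variables (R : realType) (X : completeNormedModType R).

Definition is_dual (f : X -> R) : Prop :=
  (forall (a : R) (x y : X), f (a *: x + y) = a * f x + f y) /\ continuous f.

Definition dual_valued (A : X -> set (X -> R)) : Prop :=
  forall x xs, A x xs -> is_dual xs.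

Definition monotone_op (A : X -> set (X -> R)) : Prop :=
  forall x xs y ys, A x xs -> A y ys -> 0 <= xs (x - y) - ys (x - y).

Definition maximal_monotone (A : X -> set (X -> R)) : Prop :=
  dual_valued A /\ monotone_op A /\
  forall x xs, is_dual xs ->
    (forall y ys, A y ys -> 0 <= xs (x - y) - ys (x - y)) -> A x xs.

(* n-monotonicity, with a_{n+1} = a_1 (indices 0..n-1, a_n := a_0) *)
Definition n_monotone (A : X -> set (X -> R)) (n : nat) : Prop :=
  forall (a : nat -> X) (as_ : nat -> (X -> R)),
    (forall i, (i < n)%N -> A (a i) (as_ i)) ->
    \sum_(i < n) as_ i (a (i.+1 %% n)%N) <= \sum_(i < n) as_ i (a i).

Definition cyclically_monotone (A : X -> set (X -> R)) : Prop :=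
  forall n : nat, n_monotone A n.

Definition Im_op (A : X -> set (X -> R)) : set (X -> R) :=
  [set xs | exists x, A x xs].

Definition fitzpatrick (A : X -> set (X -> R)) (x : X) (xs : X -> R) : \bar R :=
  ereal_sup [set z | exists y ys, A y ys /\ z = (ys x + xs y - ys y)%:E].

(* Properness, convexity, lower semicontinuity on X × X-star
   (norm topology on X and dual-norm topology on X-star). *)
Definition proper2 (h : X -> (X -> R) -> \bar R) : Prop :=
  (forall x xs, is_dual xs -> h x xs != -oo%E) /\
  (exists x xs, is_dual xs /\ h x xs \is a fin_num).

Definition convex2 (h : X -> (X -> R) -> \bar R) : Prop :=
  forall x xs y ys (l t s : R), is_dual xs -> is_dual ys ->
    0 <= l <= 1 -> (h x xs <= t%:E)%E -> (h y ys <= s%:E)%E ->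
    (h (l *: x + (1 - l) *: y)%R (fun z => l * xs z + (1 - l) * ys z)%R
       <= (l * t + (1 - l) * s)%:E)%E.

(* ys lies in the closed dual-norm ball of radius e around xs *)
Definition dual_close (xs ys : X -> R) (e : R) : Prop :=
  forall z, `|ys z - xs z| <= e * `|z|.

Definition lsc2 (h : X -> (X -> R) -> \bar R) : Prop :=
  forall x xs (t : R), is_dual xs -> (t%:E < h x xs)%E ->
    exists2 e : R, 0 < e & forall y ys, is_dual ys ->
      `|y - x| < e -> dual_close xs ys e -> (t%:E < h y ys)%E.

Definition representative (A : X -> set (X -> R)) (h : X -> (X -> R) -> \bar R)
  : Prop :=
  [/\ proper2 h /\ convex2 h /\ lsc2 h,
      (forall x xs, is_dual xs -> ((xs x)%:E <= h x xs)%E) &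
      (forall x xs, A x xs -> h x xs = (xs x)%:E)].

Definition proper1 (f : X -> \bar R) : Prop :=
  (forall x, f x != -oo%E) /\ (exists x, f x \is a fin_num).

Definition convex1 (f : X -> \bar R) : Prop :=
  forall x y (l t s : R), 0 <= l <= 1 -> (f x <= t%:E)%E -> (f y <= s%:E)%E ->
    (f (l *: x + (1 - l) *: y)%R <= (l * t + (1 - l) * s)%:E)%E.

Definition lsc1 (f : X -> \bar R) : Prop :=
  forall x (t : R), (t%:E < f x)%E ->
    exists2 e : R, 0 < e & forall y, `|y - x| < e -> (t%:E < f y)%E.

Definition subdiff (f : X -> \bar R) (x : X) : set (X -> R) :=
  [set xs | is_dual xs /\ f x \is a fin_num /\
            forall y, (f x + (xs (y - x)%R)%:E <= f y)%E].

End Defs.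

(* Main.v *)
Require Import Defs.
From HB Require Import structures.
From mathcomp Require Import all_boot all_order all_algebra.
From mathcomp Require Import all_classical all_reals all_analysis.
From mathcomp Require Import ring lra.
Import Order.TTheory GRing.Theory Num.Theory.
Import numFieldNormedType.Exports.
Set Implicit Arguments. Unset Strict Implicit.
Local Open Scope classical_set_scope.
Local Open Scope ring_scope.

Section Proof.
Variables (R : realType) (X : completeNormedModType R) (A : X -> set (X -> R)).

Lemma dual0 (f : X -> R) : is_dual f -> f 0 = 0.
Proof.
case=> lin _; have := lin 1 0 0; rewrite scale1r addr0 mul1r => h; lra.
Qed.

Lemma dualB (f : X -> R) x y : is_dual f -> f (x - y) = f x - f y.
Proof.
move=> hf; have := hf.1 (-1) y x; rewrite scaleN1r addrC => ->; lra.
Qed.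

Lemma dualC (f : X -> R) (l : R) x y : is_dual f ->
  f (l *: x + (1 - l) *: y) = l * f x + (1 - l) * f y.
Proof.
move=> hf; rewrite hf.1; congr (_ + _).
by have := hf.1 (1 - l) y 0; rewrite addr0 dual0 // addr0.
Qed.

Lemma cont_ball (f : X -> R) x (d : R) : continuous f -> 0 < d ->
  exists2 e : R, 0 < e & forall y, `|y - x| < e -> `|f y - f x| < d.
Proof.
move=> hf d0; have := (cvgrPdist_lt _ _).1 (hf x) d d0.
move=> H; have := (nbhs_normP x _).1 (H _); case=> e /= e0 He; exists e => // y hy.
rewrite distrC; apply: (He y); by rewrite /ball_ /= distrC.
Qed.


Hypothesis HA : maximal_monotone A.
Hypothesis HF : representative A (fitzpatrick A).

Definition F3 (x : X) (xs : X -> R) : \bar R :=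
  ereal_sup [set z | exists a1 s1 a2 s2, A a1 s1 /\ A a2 s2 /\
     z = (xs a1 + s1 a2 - s1 a1 + s2 x - s2 a2)%:E].

Lemma Adual x xs : A x xs -> is_dual xs.
Proof. by case: HA => h _; apply: h. Qed.

Lemma graph_ne : exists v vs, A v vs.
Proof.
case: (pselect (exists v vs, A v vs)) => // hn; exfalso.
apply: (hn); exists 0, (fun _ => 0).
case: HA => _ [_ hm]; apply: hm.
  by split; [move=> *; rewrite mulr0 addr0 | exact: cst_continuous].
by move=> y ys Ay; exfalso; apply: hn; exists y, ys.
Qed.

Lemma F3_ge x xs : (fitzpatrick A x xs <= F3 x xs)%E.
Proof.
apply: ge_ereal_sup => z [y [ys [Ay ->]]].
apply: ereal_sup_ubound; exists y, ys, y, ys; split => //; split => //.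
congr (_%:E); lra.
Qed.

Lemma FA_ge x xs : is_dual xs -> ((xs x)%:E <= fitzpatrick A x xs)%E.
Proof. by case: HF => _ h _; apply: h. Qed.

Lemma FA_eq x xs : A x xs -> fitzpatrick A x xs = (xs x)%:E.
Proof. by case: HF => _ _ h; apply: h. Qed.

Lemma K3 x xs a as_ : A a as_ ->
  (fitzpatrick A a xs + (as_ x - as_ a)%:E <= F3 x xs)%E.
Proof.
move=> Aa.
suff H : (fitzpatrick A a xs <= F3 x xs - (as_ x - as_ a)%:E)%E.
  by have := leeD2r (as_ x - as_ a)%:E H; rewrite subeK.
apply: ge_ereal_sup => z [y [ys [Ay ->]]].
rewrite -(leeD2rE _ _ (fin_numE _ : ((as_ x - as_ a)%:E \is a fin_num))) subeK //.
apply: ereal_sup_ubound; exists y, ys, a, as_; split => //; split => //.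
rewrite -EFinD; congr (_%:E); lra.
Qed.

Lemma F3_R3 x xs : n_monotone A 3 -> A x xs -> F3 x xs = (xs x)%:E.
Proof.
move=> h3 Ax; apply/eqP; rewrite eq_le; apply/andP; split; last first.
  by rewrite -(FA_eq Ax); apply: F3_ge.
apply: ge_ereal_sup => z [a1 [s1 [a2 [s2 [A1 [A2 ->]]]]]].
rewrite lee_fin.
pose a := (fun i => match i with 0 => a1 | 1 => a2 | _ => x end)%N.
pose as_ := (fun i => match i with 0 => s1 | 1 => s2 | _ => xs end)%N.
have hA : forall i, (i < 3)%N -> A (a i) (as_ i) by case => [|[|[|]]].
have := h3 a as_ hA.
rewrite !big_ord_recr !big_ord0 /= => H; lra.
Qed.

Lemma F3_elem x xs a1 s1 a2 s2 : A a1 s1 -> A a2 s2 ->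
  ((xs a1 + s1 a2 - s1 a1 + s2 x - s2 a2)%:E <= F3 x xs)%E.
Proof.
move=> A1 A2; apply: ereal_sup_ubound; exists a1, s1, a2, s2; split => //.
Qed.

Lemma F3_rep : n_monotone A 3 -> representative A F3.
Proof.
move=> h3; split; last first.
- by move=> x xs Ax; apply: F3_R3.
- by move=> x xs dxs; apply: le_trans (FA_ge _ dxs) (F3_ge _ _).
split; [split|split].
- move=> x xs dxs; apply/negP => /eqP h.
  by have := le_trans (FA_ge x dxs) (F3_ge _ _); rewrite h.
- have [v [vs Av]] := graph_ne; exists v, vs; split; first exact: Adual Av.
  by rewrite F3_R3.
- move=> x xs y ys l t s dxs dys /andP[l0 l1] hx hy.
  apply: ge_ereal_sup => z [a1 [s1 [a2 [s2 [A1 [A2 ->]]]]]].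
  have e1 := le_trans (F3_elem x xs A1 A2) hx.
  have e2 := le_trans (F3_elem y ys A1 A2) hy.
  rewrite lee_fin in e1; rewrite lee_fin in e2; rewrite lee_fin.
  rewrite (dualC _ _ _ (Adual A2)).
  set e1' := xs a1 + s1 a2 - s1 a1 + s2 x - s2 a2 in e1.
  set e2' := ys a1 + s1 a2 - s1 a1 + s2 y - s2 a2 in e2.
  have -> : l * xs a1 + (1 - l) * ys a1 + s1 a2 - s1 a1 +
      (l * s2 x + (1 - l) * s2 y) - s2 a2 = l * e1' + (1 - l) * e2'.
    rewrite /e1' /e2'; ring.
  apply: lerD; apply: ler_wpM2l => //; lra.
- move=> x xs t dxs /ereal_sup_gt [z [a1 [s1 [a2 [s2 [A1 [A2 ->]]]]]]].
  rewrite lte_fin => ht.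
  set e := xs a1 + s1 a2 - s1 a1 + s2 x - s2 a2 in ht.
  have d0 : 0 < (e - t) / 2 by lra.
  have [eta eta0 Heta] := cont_ball x (Adual A2).2 d0.
  pose eps := (e - t) / 2 / (`|a1| + 1).
  have n1 : 0 < `|a1| + 1 by rewrite ltr_wpDl.
  have eps0 : 0 < eps by rewrite divr_gt0.
  have epsE : eps * (`|a1| + 1) = (e - t) / 2 by rewrite /eps divfK // gt_eqF.
  exists (Order.min eta eps); first by rewrite lt_min eta0 eps0.
  move=> y ys dys hy hc.
  apply: lt_le_trans (F3_elem y ys A1 A2); rewrite lte_fin.
  have := le_refl (Order.min eta eps); rewrite le_min => /andP[m1 m2].
  have h1 := Heta y (lt_le_trans hy m1).
  have h2 : `|ys a1 - xs a1| <= eps * `|a1|.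
    apply: le_trans (hc a1) _; apply: ler_wpM2r => //.
  have h3' : eps * `|a1| < (e - t) / 2.
    rewrite -epsE ltr_pM2l //; lra.
  move: h1 => /ltr_normlP [h1 h1']; move: h2 => /ler_normlP [h2 h2'].
  rewrite /e in ht h1 h1' h3'; lra.
Qed.

Lemma chain
  (K : forall x xs a as_, is_dual xs -> A a as_ ->
     (fitzpatrick A a xs + (as_ x - as_ a)%:E <= fitzpatrick A x xs)%E) m :
  forall (b : nat -> X) (bs : nat -> X -> R),
  (forall i, (i <= m)%N -> A (b i) (bs i)) -> forall x xs, is_dual xs ->
  ((xs (b 0%N) + \sum_(i < m) (bs i (b i.+1) - bs i (b i))
     + (bs m x - bs m (b m)))%:E <= fitzpatrick A x xs)%E.
Proof.
elim: m => [|m IH] b bs hb x xs dxs.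
  rewrite big_ord0; apply: ereal_sup_ubound; exists (b 0%N), (bs 0%N).
  split; first exact: hb.
  congr (_%:E); lra.
have IH' := IH b bs (fun i hi => hb i (leqW hi)) (b m.+1) xs dxs.
have K' := K x xs _ _ dxs (hb m.+1 (leqnn _)).
apply: le_trans K'; apply: le_trans (leeD2r _ IH').
rewrite -EFinD lee_fin big_ord_recr /=; lra.
Qed.

Lemma cyc_of_3
  (Hs : forall h, representative A h ->
       forall x xs, is_dual xs -> h x xs = fitzpatrick A x xs)
  (h3 : n_monotone A 3) :
  (forall x xs a as_, is_dual xs -> A a as_ ->
     (fitzpatrick A a xs + (as_ x - as_ a)%:E <= fitzpatrick A x xs)%E).
Proof.
move=> x xs a as_ dxs Aa; rewrite -(Hs _ (F3_rep h3) x xs dxs); exact: K3.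
Qed.

Lemma cyc_all
  (K : forall x xs a as_, is_dual xs -> A a as_ ->
     (fitzpatrick A a xs + (as_ x - as_ a)%:E <= fitzpatrick A x xs)%E) :
  cyclically_monotone A.
Proof.
case => [|m] a as_ ha; first by rewrite !big_ord0.
have hb : forall i, (i <= m)%N -> A (a i) (as_ i) by move=> i hi; apply: ha.
have := chain K hb (a 0%N) (Adual (ha 0%N isT)).
rewrite FA_eq ?lee_fin; last exact: ha.
rewrite !big_ord_recr /= modnn => H; rewrite sumrB in H.
rewrite (eq_bigr (fun i : 'I_m => as_ i (a i.+1))); first lra.
by move=> i _; rewrite modn_small // ltnS.
Qed.

End Proof.

Theorem theoremA (R : realType) (X : completeNormedModType R)
    (A : X -> set (X -> R))
    (HA : maximal_monotone A)
    (HF : representative A (fitzpatrick A))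
    (Hsing : forall h, representative A h ->
       forall x xs, is_dual xs -> h x xs = fitzpatrick A x xs) :
  (n_monotone A 3 <-> cyclically_monotone A) /\
  (cyclically_monotone A ->
   forall vs, Im_op A vs ->
     [/\ proper1 (fun x => fitzpatrick A x vs),
         convex1 (fun x => fitzpatrick A x vs),
         lsc1 (fun x => fitzpatrick A x vs) &
         forall x, A x = subdiff (fun y => fitzpatrick A y vs) x]).
Proof.
split.
  split; last by move=> hc; apply: hc.
  by move=> h3; apply: (cyc_all HA HF (cyc_of_3 HA HF Hsing h3)).
move=> hc vs [v Av].
have K := cyc_of_3 HA HF Hsing (hc 3%N).
have dvs := Adual HA Av.
have sub1 : forall x xs, A x xs -> subdiff (fun y => fitzpatrick A y vs) x xs.
  move=> x xs Ax; have dxs := Adual HA Ax.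
  have lo := FA_ge HF x dvs.
  have up := K v vs x xs dvs Ax; rewrite (FA_eq HF Av) in up.
  split => //; split.
    move: lo up; case: (fitzpatrick A x vs) => //.
  move=> y; rewrite (dualB _ _ dxs); exact: K.
split.
- split.
    move=> x; apply/negP => /eqP h.
    by have := FA_ge HF x dvs; rewrite h.
  by exists v; rewrite (FA_eq HF Av).
- move=> x y l t s hl hx hy.
  case: HF => [[_ [hcv _]] _ _].
  have := hcv x vs y vs l t s dvs dvs hl hx hy.
  rewrite (_ : (fun z => l * vs z + (1 - l) * vs z) = vs) //.
  by apply/funext => z /=; ring.
- move=> x t ht; case: HF => [[_ [_ hls]] _ _].
  have [e e0 He] := hls x vs t dvs ht.
  exists e => // y hy; apply: He => // z.
  by rewrite subrr normr0 mulr_ge0 // ltW.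
- move=> x; apply/seteqP; split; first by move=> xs; apply: sub1.
  move=> xs [dxs [fx hx]].
  case: HA => _ [_ hm]; apply: hm => // y ys Ay.
  have [dys [fy hy]] := sub1 _ _ Ay.
  have h1 := hx y; have h2 := hy x.
  move: fx fy h1 h2; rewrite /= !(dualB _ _ dxs) !(dualB _ _ dys).
  case: (fitzpatrick A x vs) => // r; case: (fitzpatrick A y vs) => // q _ _.
  rewrite -!EFinD !lee_fin => h1 h2; lra.
Qed.
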